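(* For every positive integer $N$ there exists a SudoQ of size $N^2\times N^2$ of maximal cardinality $N^4$, i.e. all of its $N^4$ entries are pairwise distinct (up to global phase).
   Context: A SudoQ of size $N^2\times N^2$ is an $N^2\times N^2$ array of unit vectors in $\mathbb{C}^{N^2}$ such that the entries of each row, each column, and each of the $N^2$ disjoint $N\times N$ blocks form an orthonormal basis of $\mathbb{C}^{N^2}$. Its cardinality is the number of distinct entries, vectors differing only by a global phase being considered equal. *)

(* Defs.v *)
From HB Require Import structures.
From mathcomp Require Import all_boot all_order all_algebra.
From mathcomp Require Import complex Rstruct zify.
From Stdlib Require Import Reals.
Set Implicit Arguments. Unset Strict Implicit. Unset Printing Implicit Defensive.
Import Order.TTheory GRing.Theory Num.Theory.
Local Open Scope ring_scope.

Definition CC : Type := complex R.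
Definition CC_numClosed : numClosedFieldType := CC.

Notation Cvec n := 'rV[CC_numClosed]_n.

Definition cdot (n : nat) (u v : Cvec n) : CC_numClosed :=
  \sum_(k < n) u 0 k * (v 0 k)^*.

Definition is_onb (n : nat) (I : finType) (f : I -> Cvec n) : Prop :=
  (forall i j : I, cdot (f i) (f j) = (i == j)%:R) /\
  (forall v : Cvec n, exists c : I -> CC_numClosed, v = \sum_(i : I) c i *: f i).

Local Open Scope nat_scope.
Lemma cell_index_proof (N : nat) (a i : 'I_N) : a * N + i < N * N.
Proof.
case: a i => a Ha [i Hi] /=; nia.
Qed.
Definition cell_index (N : nat) (a i : 'I_N) : 'I_(N * N) :=
  Ordinal (cell_index_proof a i).
Local Open Scope ring_scope.

(* An N^2 x N^2 array of vectors of C^(N^2); rows/columns indexed by 'I_(N*N),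
   the (a,b)-th N x N block consisting of the cells (a*N+i, b*N+j). *)
Definition is_SudoQ (N : nat) (S : 'I_(N * N) -> 'I_(N * N) -> Cvec (N * N)) : Prop :=
  (forall i j, cdot (S i j) (S i j) = 1) /\
  (forall r : 'I_(N * N), is_onb (fun c : 'I_(N * N) => S r c)) /\
  (forall c : 'I_(N * N), is_onb (fun r : 'I_(N * N) => S r c)) /\
  (forall a b : 'I_N,
      is_onb (fun p : 'I_N * 'I_N => S (cell_index a p.1) (cell_index b p.2))).

Definition phase_eq (n : nat) (u v : Cvec n) : Prop :=
  exists z : CC_numClosed, `|z| = 1 /\ u = z *: v.

Definition all_entries_distinct (N : nat) (S : 'I_(N * N) -> 'I_(N * N) -> Cvec (N * N)) : Prop :=
  forall i j k l : 'I_(N * N), (i, j) != (k, l) -> ~ phase_eq (S i j) (S k l).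

(* Main.v *)
Require Import Defs.
From Stdlib Require Import Reals.
From HB Require Import structures.
From mathcomp Require Import all_boot all_order all_algebra.
From mathcomp Require Import complex Rstruct zify ring lra.
Set Implicit Arguments. Unset Strict Implicit. Unset Printing Implicit Defensive.
Import Order.TTheory GRing.Theory Num.Theory.
Local Open Scope ring_scope.


Lemma natCC (k : nat) : (k%:R : CC_numClosed) = Complex (k%:R : R) 0.
Proof.
elim: k => [//|k IH]; rewrite -[in LHS]addn1 natrD IH -[in RHS]addn1 natrD.
change (Complex ((k%:R : R) + 1) (0 + 0) = Complex ((k%:R : R) + 1) 0); by rewrite addr0.
Qed.

Definition cst (n : nat) (k : 'I_n.+1) : CC_numClosed :=
  let s := (k.+1)%:R : R in let D := (n.+1)%:R * (s ^+ 2 + 1) in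
  Complex (- 2 / D) (- 2 * s / D).

Lemma cst_Im (n : nat) (k : 'I_n.+1) : complex.Im (cst k) < 0.
Proof.
rewrite /cst /=.
have s0 : 0 < (k.+1)%:R :> R by rewrite ltr0n.
have D0 : 0 < (n.+1)%:R * (((k.+1)%:R : R) ^+ 2 + 1) :> R.
  by rewrite mulr_gt0 // ?ltr0n // ltr_wpDl // sqr_ge0.
have : 0 < k.+1%:R / (n.+1%:R * (k.+1%:R ^+ 2 + 1)) :> R by rewrite divr_gt0.
move=> H; rewrite -mulrA nmulr_rlt0 //; lra.
Qed.

Lemma cst_eq (n : nat) (k : 'I_n.+1) :
  cst k + (cst k)^* + (n.+1)%:R * (cst k * (cst k)^*) = 0.
Proof.
rewrite natCC /cst /=.
have s0 : 0 < (k.+1)%:R :> R by rewrite ltr0n.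
have D0 : (n.+1)%:R * (((k.+1)%:R : R) ^+ 2 + 1) != 0 :> R.
  by rewrite lt0r_neq0 // mulr_gt0 // ?ltr0n // ltr_wpDl // sqr_ge0.
have N0 : (n.+1)%:R != 0 :> R by rewrite pnatr_eq0.
have S0 : ((k.+1)%:R : R) ^+ 2 + 1 != 0 by rewrite lt0r_neq0 // ltr_wpDl // sqr_ge0.
congr Complex; field; by rewrite !nat1r S0 N0.
Qed.

Lemma cst_inj (n : nat) : injective (@cst n).
Proof.
move=> k k' /= E.
have S0 : forall k : 'I_n.+1, ((k.+1)%:R : R) ^+ 2 + 1 != 0.
  by move=> ?; rewrite lt0r_neq0 // ltr_wpDl // sqr_ge0.
have N0 : (n.+1)%:R != 0 :> R by rewrite pnatr_eq0.
have E1 := congr1 (@complex.Re R) E; have E2 := congr1 (@complex.Im R) E.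
rewrite /cst /= in E1 E2.
have : ((k.+1)%:R : R) = (k'.+1)%:R.
  have -> : ((k.+1)%:R : R) = (- 2 * (k.+1)%:R / ((n.+1)%:R * ((k.+1)%:R ^+ 2 + 1))) / (- 2 / ((n.+1)%:R * ((k.+1)%:R ^+ 2 + 1))).
    by field; rewrite !nat1r S0 N0.
  rewrite E1 E2; field; by rewrite !nat1r S0 N0.
move/eqP; rewrite eqr_nat eqSS => /eqP H; exact: val_inj.
Qed.

Lemma sum_ind (k : nat) (F : 'I_k -> CC_numClosed) (m : 'I_k) :
  \sum_(t < k) (t == m)%:R * F t = F m.
Proof.
rewrite (bigD1 m) //= eqxx mul1r big1 ?addr0 // => t /negbTE ->; by rewrite mul0r.
Qed.

Definition bv (n : nat) (k m : 'I_n.+1) : Cvec n.+1 :=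
  \row_t ((t == m)%:R + cst k).

Lemma cdot_bv (n : nat) (k m m' : 'I_n.+1) :
  cdot (bv k m) (bv k m') = (m == m')%:R.
Proof.
rewrite /cdot.
under eq_bigr => t _ do rewrite !mxE rmorphD /= conjC_nat mulrDl !mulrDr.
rewrite !big_split /= (sum_ind (fun t => (t == m')%:R)) (sum_ind (fun=> (cst k)^*)).
under [X in _ + (X + _)]eq_bigr => t _ do rewrite mulrC.
rewrite (sum_ind (fun=> cst k)) sumr_const card_ord -mulr_natl.
have E := cst_eq k.
rewrite -[RHS]addr0 -E; ring.
Qed.

Lemma Im_nat_add (b : nat) (z : CC_numClosed) :
  complex.Im (b%:R + z) = complex.Im z.
Proof. by rewrite natCC; case: z => x y /=; rewrite add0r. Qed.

Lemma bv_nz (n : nat) (k m t : 'I_n.+1) : bv k m 0 t != 0.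
Proof.
apply/eqP => H; have := congr1 (@complex.Im R) H.
rewrite mxE Im_nat_add => E; have := cst_Im k; rewrite E /=; by rewrite ltxx.
Qed.

Lemma bv_par (n : nat) (k m k' m' : 'I_n.+1) (w : CC_numClosed) :
  bv k m = w *: bv k' m' -> k = k' /\ m = m'.
Proof.
move=> H.
have E : forall t, (t == m)%:R + cst k = w * ((t == m')%:R + cst k').
  by move=> t; have := congr1 (fun v : Cvec n.+1 => v 0 t) H; rewrite !mxE.
case: (eqVneq m m') => [eq|ne]; first subst m'.
  split => //.
  case: n k m k' H E => [|n] k m k' H E.
    by rewrite (ord1 k) (ord1 k').
  have ne : m + 1 != m.
    by rewrite -[X in _ != X]addr0 (inj_eq (addrI m)) oner_eq0.
  have e1 := E (m + 1); rewrite (negbTE ne) add0r add0r in e1.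
  have e2 := E m; rewrite eqxx mulrDr mulr1 -e1 in e2.
  have w1 : w = 1 by apply: (addIr (cst k)); rewrite -e2.
  by apply: cst_inj; rewrite e1 w1 mul1r.
have e1 := E m; rewrite eqxx (negbTE ne) add0r in e1.
have e2 := E m'; rewrite eqxx eq_sym (negbTE ne) add0r mulrDr mulr1 -e1 in e2.
have w1 : w = -1.
  apply/eqP; rewrite -subr_eq0 opprK; apply/eqP.
  rewrite /= mulr1n in e2; apply: (addIr (cst k)); by rewrite add0r [RHS]e2 addrA.
rewrite w1 mulN1r in e1.
have : 1 + cst k + cst k' = 0 by rewrite /= mulr1n in e1; rewrite e1 addNr.
move/(congr1 (@complex.Im R)).
have := cst_Im k; have := cst_Im k'.
rewrite /cst /= => h1 h2; rewrite add0r => h3; by move: (ltrD h2 h1); rewrite h3 addr0 ltxx.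
Qed.

Definition qo (n : nat) (k : 'I_(n.+1 * n.+1)) : 'I_n.+1 := inord (k %/ n.+1).
Definition ro (n : nat) (k : 'I_(n.+1 * n.+1)) : 'I_n.+1 := inord (k %% n.+1).

Lemma qo_cell (n : nat) (a i : 'I_n.+1) : qo (cell_index a i) = a.
Proof.
apply: val_inj; rewrite /qo /= divnMDl // divn_small // addn0 inordK //.
Qed.

Lemma ro_cell (n : nat) (a i : 'I_n.+1) : ro (cell_index a i) = i.
Proof.
apply: val_inj; rewrite /ro /= modnMDl modn_small // inordK //.
Qed.

Lemma cell_qr (n : nat) (k : 'I_(n.+1 * n.+1)) : cell_index (qo k) (ro k) = k.
Proof.
apply: val_inj; rewrite /qo /ro /= !inordK ?ltn_mod -?divn_eq //.
by rewrite ltn_divLR // ltn_ord.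
Qed.

Lemma eq_cell (n : nat) (k k' : 'I_(n.+1 * n.+1)) :
  (k == k') = (qo k == qo k') && (ro k == ro k').
Proof.
apply/eqP/andP => [->//|[/eqP e1 /eqP e2]].
by rewrite -(cell_qr k) -(cell_qr k') e1 e2.
Qed.

Definition tens (n : nat) (x y : Cvec n.+1) : Cvec (n.+1 * n.+1) :=
  \row_k (x 0 (qo k) * y 0 (ro k)).

Lemma cdot_tens (n : nat) (x y x' y' : Cvec n.+1) :
  cdot (tens x y) (tens x' y') = cdot x x' * cdot y y'.
Proof.
rewrite /cdot (reindex (fun p : 'I_n.+1 * 'I_n.+1 => cell_index p.1 p.2)) /=.
  rewrite big_distrl /=.
  rewrite (eq_bigr (fun i => \sum_(j < n.+1) (x 0 i * y 0 j * (x' 0 i * y' 0 j)^*))); last first.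
    move=> i _; rewrite big_distrr /=; apply: eq_bigr => j _.
    by rewrite rmorphM /=; ring.
  rewrite pair_big /=; apply: eq_bigr => p _.
  by rewrite !mxE qo_cell ro_cell.
apply: onW_bij; exists (fun k => (qo k, ro k)) => [[a i]|k] /=.
  by rewrite qo_cell ro_cell.
by rewrite cell_qr.
Qed.

Lemma tens_par (n : nat) (x y x' y' : Cvec n.+1) (z : CC_numClosed) :
  x 0 0 != 0 -> y 0 0 != 0 -> tens x y = z *: tens x' y' ->
  (exists w, x = w *: x') /\ (exists w, y = w *: y').
Proof.
move=> x0 y0 H.
have E : forall a i, x 0 a * y 0 i = z * (x' 0 a * y' 0 i).
  move=> a i; have := congr1 (fun v : Cvec (n.+1 * n.+1) => v 0 (cell_index a i)) H.
  by rewrite !mxE qo_cell ro_cell.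
split.
  exists (z * y' 0 0 / y 0 0); apply/rowP => t; rewrite !mxE.
  apply: (mulIf y0); rewrite E; field; exact: y0.
exists (z * x' 0 0 / x 0 0); apply/rowP => t; rewrite !mxE.
apply: (mulfI x0); rewrite E; field; exact: x0.
Qed.

Lemma onb_of_orth (k : nat) (I : finType) (f : I -> Cvec k) :
  #|I| = k -> (forall i j, cdot (f i) (f j) = (i == j)%:R) -> is_onb f.
Proof.
move=> cI orth; split => // v.
pose M := \matrix_(r < #|I|, t < k) f (enum_val r) 0 t.
pose M' := \matrix_(t < k, r < #|I|) (f (enum_val r) 0 t)^*.
have MM : M *m M' = 1%:M.
  apply/matrixP => r r'; rewrite !mxE.
  have := orth (enum_val r) (enum_val r'); rewrite /cdot (inj_eq enum_val_inj) => <-.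
  apply: eq_bigr => t _; by rewrite !mxE.
have rk : \rank M = k.
  apply/eqP; rewrite eqn_leq rank_leq_col /=.
  by rewrite -{1}cI -{1}(mxrank1 CC_numClosed #|I|) -MM mxrankM_maxl.
have /submxP [D hD] : (v <= M)%MS by apply: submx_full; rewrite /row_full rk.
exists (fun i => D 0 (enum_rank i)).
apply/rowP => t; rewrite hD !mxE summxE.
rewrite (reindex (@enum_val _ (pred_of_simpl (@predT I)))) /=; last first.
  by apply: onW_bij; exists (@enum_rank _) => [r|i]; rewrite ?enum_valK ?enum_rankK.
apply: eq_bigr => r _; by rewrite !mxE enum_valK.
Qed.

Definition SQ (n : nat) (r c : 'I_(n.+1 * n.+1)) : Cvec (n.+1 * n.+1) :=
  tens (bv (qo r) (ro r + qo c)) (bv (qo c) (qo r + ro c)).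

Lemma SQ_row (n : nat) (r c c' : 'I_(n.+1 * n.+1)) :
  cdot (SQ r c) (SQ r c') = (c == c')%:R.
Proof.
rewrite /SQ cdot_tens cdot_bv (inj_eq (addrI _)) eq_cell.
case: (eqVneq (qo c) (qo c')) => [e|ne]; last by rewrite mul0r.
by rewrite e cdot_bv (inj_eq (addrI _)) mul1r.
Qed.

Lemma SQ_col (n : nat) (c r r' : 'I_(n.+1 * n.+1)) :
  cdot (SQ r c) (SQ r' c) = (r == r')%:R.
Proof.
rewrite /SQ cdot_tens [X in _ * X]cdot_bv (inj_eq (addIr _)) eq_cell.
case: (eqVneq (qo r) (qo r')) => [e|ne]; last by rewrite mulr0.
by rewrite e cdot_bv (inj_eq (addIr _)) mulr1.
Qed.

Lemma SQ_block (n : nat) (a b : 'I_n.+1) (p p' : 'I_n.+1 * 'I_n.+1) :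
  cdot (SQ (cell_index a p.1) (cell_index b p.2))
       (SQ (cell_index a p'.1) (cell_index b p'.2)) = (p == p')%:R.
Proof.
rewrite /SQ !qo_cell !ro_cell cdot_tens !cdot_bv (inj_eq (addIr _)) (inj_eq (addrI _)).
by rewrite -natrM mulnb.
Qed.

Lemma SQ_distinct (n : nat) : all_entries_distinct (@SQ n).
Proof.
move=> r c r' c' ne [z [_ H]].
have [[w1 H1] [w2 H2]] := tens_par (bv_nz _ _ _) (bv_nz _ _ _) H.
have [ea eib] := bv_par H1; have [eb eaj] := bv_par H2.
rewrite ea eb in eib eaj.
have ei := addIr _ eib; have ej := addrI _ eaj.
move: ne; rewrite xpair_eqE !eq_cell ea ei eb ej !eqxx.
by [].
Qed.

Lemma SQ_sudoq (n : nat) : is_SudoQ (@SQ n).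
Proof.
have cI : #|'I_(n.+1 * n.+1)| = (n.+1 * n.+1)%N by rewrite card_ord.
split; last split; last split.
- by move=> i j; rewrite SQ_row eqxx.
- by move=> r; apply: onb_of_orth => // c c'; exact: SQ_row.
- by move=> c; apply: onb_of_orth => // r r'; exact: SQ_col.
- move=> a b; apply: onb_of_orth => [|p p']; last exact: SQ_block.
  by rewrite card_prod card_ord.
Qed.

Theorem mainTheorem19 (N : nat) (hN : (0 < N)%N) :
  exists S : 'I_(N * N) -> 'I_(N * N) -> Cvec (N * N),
    is_SudoQ S /\ all_entries_distinct S.
Proof.
case: N hN => [//|n] _.
exists (@SQ n); split; [exact: SQ_sudoq | exact: SQ_distinct].
Qed.
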